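(* If $\lambda$ is a cardinal with $\lambda>\operatorname{cf}(\lambda)=\omega$, then $\mathfrak{i}_\lambda>\lambda$.
   Context: For $\mathcal{A}\subseteq[\lambda]^\lambda$, $\operatorname{comb}(\mathcal{A})$ is the set of all sets $\bigcap\Gamma-\bigcup\Delta$ with $\Gamma,\Delta\in[\mathcal{A}]^{<\omega}$, $\Gamma\cap\Delta=\varnothing$. $\mathcal{A}\subseteq[\lambda]^\lambda$ is independent iff $\operatorname{comb}(\mathcal{A})\subseteq[\lambda]^\lambda$. The independence number $\mathfrak{i}_\lambda$ is the minimal size of a maximal (under inclusion) independent family in $[\lambda]^\lambda$. *)

(* Defs.v *)
From Stdlib Require Import List.
Import ListNotations.

(* A cardinal lambda is represented by a type X carrying a strict well-order R
   whose order type is the initial ordinal lambda. *)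

Definition injective {A B : Type} (f : A -> B) : Prop :=
  forall a1 a2, f a1 = f a2 -> a1 = a2.

Definition strict_well_order {X : Type} (R : X -> X -> Prop) : Prop :=
  (forall x, ~ R x x) /\
  (forall x y z, R x y -> R y z -> R x z) /\
  (forall x y, R x y \/ x = y \/ R y x) /\
  well_founded R.

Definition is_cardinal {X : Type} (R : X -> X -> Prop) : Prop :=
  strict_well_order R /\
  forall a : X, ~ exists f : X -> {y : X | R y a}, injective f.

Definition uncountable (X : Type) : Prop :=
  ~ exists f : X -> nat, injective f.

Definition cof_omega {X : Type} (R : X -> X -> Prop) : Prop :=
  exists s : nat -> X,
    (forall n, R (s n) (s (S n))) /\ (forall a, exists n, R a (s n)).

(* [lambda]^lambda : subsets of X of cardinality lambda *)
Definition full_size {X : Type} (S : X -> Prop) : Prop :=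
  exists f : X -> {x : X | S x}, injective f.

(* the combination  /\Gamma - \/Delta  (with /\[] = X) *)
Definition comb_set {X : Type} (G D : list (X -> Prop)) : X -> Prop :=
  fun x => (forall S, In S G -> S x) /\ (forall S, In S D -> ~ S x).

Definition independent {X : Type} (A : (X -> Prop) -> Prop) : Prop :=
  (forall S, A S -> full_size S) /\
  forall G D : list (X -> Prop),
    (forall S, In S G -> A S) ->
    (forall S, In S D -> A S) ->
    (forall S, In S G -> ~ In S D) ->
    full_size (comb_set G D).

Definition maximal_independent {X : Type} (A : (X -> Prop) -> Prop) : Prop :=
  independent A /\
  forall B : (X -> Prop) -> Prop,
    independent B -> (forall S, A S -> B S) -> forall S, B S -> A S.

(* Main.v *)
Require Import Defs.
From Stdlib Require Import List Arith Lia Relations Wellfounded.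
From Stdlib Require Import ClassicalEpsilon FunctionalExtensionality ProofIrrelevance Classical.
Import ListNotations.

Lemma wf_choose {W V : Type} (lt : W -> W -> Prop) (T : W -> V -> Prop) :
  well_founded lt -> (forall x y, lt x y \/ x = y \/ lt y x) ->
  (forall p (h : forall q, lt q p -> V), exists v, T p v /\ forall q H, h q H <> v) ->
  exists g : W -> V, (forall p, T p (g p)) /\ injective g.
Proof.
  intros wf tot fresh.
  set (F := fun p (h : forall q, lt q p -> V) =>
        proj1_sig (constructive_indefinite_description _ (fresh p h))).
  set (g := Fix wf (fun _ => V) F).
  assert (Hg : forall p, g p = F p (fun q _ => g q)).
  { intro p. unfold g. apply (@Fix_eq W lt wf (fun _ => V) F). intros x f1 f2 Hf.
    assert (f1 = f2) as ->.
    { apply functional_extensionality_dep; intro y.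
      apply functional_extensionality_dep; intro H. apply Hf. }
    reflexivity. }
  assert (Hp : forall p, T p (g p) /\ forall q, lt q p -> g q <> g p).
  { intro p. rewrite (Hg p). unfold F.
    destruct (constructive_indefinite_description _ _) as [v [Hv1 Hv2]]. simpl.
    split; [exact Hv1|]. intros q Hq. exact (Hv2 q Hq). }
  exists g. split; [intro p; apply Hp|].
  intros p q E. destruct (tot p q) as [H|[H|H]]; auto.
  - exfalso. exact (proj2 (Hp q) p H E).
  - exfalso. exact (proj2 (Hp p) q H (eq_sym E)).
Qed.

Lemma fresh_of_small {W V : Type} (lt : W -> W -> Prop) (U : V -> Prop) p
  (h : forall q, lt q p -> V) :
  ~ (exists c : {v | U v} -> W, (forall v, lt (c v) p) /\ injective c) ->
  exists v, U v /\ forall q H, h q H <> v.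
Proof.
  intro Hn. apply NNPP. intro Hc. apply Hn.
  assert (Hall : forall v : {v | U v}, exists q (H : lt q p), h q H = proj1_sig v).
  { intros [v Hv]. simpl. apply NNPP. intro Hq. apply Hc. exists v. split; [exact Hv|].
    intros q H E. apply Hq. exists q, H. exact E. }
  exists (fun v => proj1_sig (constructive_indefinite_description _ (Hall v))).
  split.
  - intro v. destruct (proj2_sig (constructive_indefinite_description _ (Hall v))) as [H _]. exact H.
  - intros v1 v2 E.
    destruct (proj2_sig (constructive_indefinite_description _ (Hall v1))) as [H1 E1].
    destruct (proj2_sig (constructive_indefinite_description _ (Hall v2))) as [H2 E2].
    revert H2 E2. rewrite <- E. intros H2 E2.
    rewrite (proof_irrelevance _ H2 H1) in E2. rewrite E1 in E2.
    destruct v1 as [v1 P1], v2 as [v2 P2]. simpl in *. subst v2.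
    f_equal. apply proof_irrelevance.
Qed.

Lemma pigeon K : ~ exists f : nat -> nat, (forall i, f i < K) /\ (forall i j, f i = f j -> i = j).
Proof.
  induction K as [|K IH]; intros [f [Hb Hi]].
  - specialize (Hb 0). lia.
  - destruct (classic (exists i0, f i0 = K)) as [[i0 Hi0]|Hno].
    + apply IH. exists (fun i => f (if i <? i0 then i else S i)). split.
      * intro i. assert (f (if i <? i0 then i else S i) <> K).
        { intro E. rewrite <- Hi0 in E. apply Hi in E.
          destruct (Nat.ltb_spec i i0); lia. }
        specialize (Hb (if i <? i0 then i else S i)). lia.
      * intros i j E. apply Hi in E.
        destruct (Nat.ltb_spec i i0), (Nat.ltb_spec j i0); lia.
    + apply IH. exists f. split; auto.
      intro i. specialize (Hb i). assert (f i <> K) by (intro E; apply Hno; eauto). lia.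
Qed.
Definition inj (A B : Type) : Prop := exists f : A -> B, injective f.

Lemma inj_trans A B C : inj A B -> inj B C -> inj A C.
Proof. intros [f Hf] [g Hg]. exists (fun x => g (f x)). intros x y E. auto. Qed.

Lemma inj_prod A B A' B' : inj A A' -> inj B B' -> inj (A * B) (A' * B').
Proof.
  intros [f Hf] [g Hg]. exists (fun p => (f (fst p), g (snd p))).
  intros [x1 y1] [x2 y2] E. simpl in E. injection E as E1 E2.
  apply Hf in E1. apply Hg in E2. subst. reflexivity.
Qed.

Definition below {X : Type} (R : X -> X -> Prop) (a : option X) (w : X) : Prop :=
  match a with None => True | Some b => R w b end.

Definition SS {X : Type} (R : X -> X -> Prop) (a : option X) : Type :=
  ({w : X | below R a w} + nat)%type.

Definition ltS {X : Type} (R : X -> X -> Prop) (a : option X) (x y : SS R a) : Prop :=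
  match x, y with
  | inr n, inr m => n < m
  | inr _, inl _ => True
  | inl _, inr _ => False
  | inl u, inl v => R (proj1_sig u) (proj1_sig v)
  end.

Definition ropt {X : Type} (R : X -> X -> Prop) (x y : option X) : Prop :=
  match x, y with
  | Some u, None => True
  | Some u, Some v => R u v
  | _, _ => False
  end.

Lemma ltS_wf {X} (R : X -> X -> Prop) a : well_founded R -> well_founded (ltS R a).
Proof.
  intros wf.
  assert (Hn : forall n, Acc (ltS R a) (inr n)).
  { intro n. induction n as [n IH] using (well_founded_induction lt_wf).
    constructor. intros [y|m] H; simpl in H; [contradiction|]. apply IH. exact H. }
  assert (Hl : forall w (H : below R a w), Acc (ltS R a) (inl (exist _ w H))).
  { intro w. induction w as [w IH] using (well_founded_induction wf).
    intro H. constructor. intros [[v Hv]|m] Hlt; simpl in Hlt.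
    - apply IH. exact Hlt.
    - apply Hn. }
  intros [[w H]|n]; auto.
Qed.

Lemma ltS_trans {X} (R : X -> X -> Prop) a :
  (forall x y z, R x y -> R y z -> R x z) ->
  forall x y z, ltS R a x y -> ltS R a y z -> ltS R a x z.
Proof.
  intros Ht [u|n] [v|m] [w|k]; simpl; intros; try contradiction; eauto; lia.
Qed.

Lemma ltS_irr {X} (R : X -> X -> Prop) a :
  (forall x, ~ R x x) -> forall x, ~ ltS R a x x.
Proof. intros Hi [u|n]; simpl; auto. lia. Qed.

Lemma ltS_tot {X} (R : X -> X -> Prop) a :
  (forall x y, R x y \/ x = y \/ R y x) ->
  forall x y, ltS R a x y \/ x = y \/ ltS R a y x.
Proof.
  intros Ht [[u Hu]|n] [[v Hv]|m]; simpl; auto.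
  - destruct (Ht u v) as [H|[H|H]]; auto. subst. right; left.
    rewrite (proof_irrelevance _ Hu Hv). reflexivity.
  - destruct (Nat.lt_trichotomy n m) as [H|[H|H]]; auto.
Qed.

Lemma ropt_wf {X} (R : X -> X -> Prop) : well_founded R -> well_founded (ropt R).
Proof.
  intros wf.
  assert (Hs : forall u, Acc (ropt R) (Some u)).
  { intro u. induction u as [u IH] using (well_founded_induction wf).
    constructor. intros [v|] H; simpl in H; [|contradiction]. apply IH. exact H. }
  intros [u|]; auto. constructor. intros [v|] H; simpl in H; [auto|contradiction].
Qed.
Definition leS {X} (R : X -> X -> Prop) a (x y : SS R a) := ltS R a x y \/ x = y.
Definition maxS {X} (R : X -> X -> Prop) a (x y : SS R a) :=
  if excluded_middle_informative (ltS R a x y) then y else x.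
Definition keyG {X} (R : X -> X -> Prop) a (p : SS R a * SS R a) :=
  (maxS R a (fst p) (snd p), (fst p, snd p)).
Definition godel {X} (R : X -> X -> Prop) a (p q : SS R a * SS R a) :=
  slexprod _ _ (ltS R a) (slexprod _ _ (ltS R a) (ltS R a)) (keyG R a p) (keyG R a q).

Lemma slex_tot {A B} (la : A -> A -> Prop) (lb : B -> B -> Prop) :
  (forall x y, la x y \/ x = y \/ la y x) -> (forall x y, lb x y \/ x = y \/ lb y x) ->
  forall x y, slexprod A B la lb x y \/ x = y \/ slexprod A B la lb y x.
Proof.
  intros Ha Hb [x1 x2] [y1 y2].
  destruct (Ha x1 y1) as [H|[H|H]].
  - left. constructor. exact H.
  - subst. destruct (Hb x2 y2) as [H|[H|H]].
    + left. apply right_slex. exact H.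
    + subst. auto.
    + right; right. apply right_slex. exact H.
  - right; right. constructor. exact H.
Qed.


Lemma le_max_l {X} (R : X -> X -> Prop) a x y : leS R a x (maxS R a x y).
Proof. unfold leS, maxS. destruct (excluded_middle_informative _); auto. Qed.

Lemma le_max_r {X} (R : X -> X -> Prop) a :
  (forall x y, R x y \/ x = y \/ R y x) -> forall x y, leS R a y (maxS R a x y).
Proof.
  intros Ht x y. unfold leS, maxS. destruct (excluded_middle_informative _); auto.
  destruct (ltS_tot R a Ht x y) as [H|[H|H]]; auto. contradiction.
Qed.

Lemma leS_trans {X} (R : X -> X -> Prop) a :
  (forall x y z, R x y -> R y z -> R x z) ->
  forall x y z, leS R a x y -> leS R a y z -> leS R a x z.
Proof.
  intros Ht x y z [H1|H1] [H2|H2]; subst; unfold leS; auto.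
  left. eapply ltS_trans; eauto.
Qed.

Lemma godel_bound {X} (R : X -> X -> Prop) a :
  (forall x y z, R x y -> R y z -> R x z) -> (forall x y, R x y \/ x = y \/ R y x) ->
  forall p q, godel R a q p ->
  leS R a (fst q) (maxS R a (fst p) (snd p)) /\ leS R a (snd q) (maxS R a (fst p) (snd p)).
Proof.
  intros Htr Hto [p1 p2] [q1 q2] H. unfold godel, keyG in H. simpl in *.
  assert (Hm : leS R a (maxS R a q1 q2) (maxS R a p1 p2)).
  { inversion H; subst. - left; assumption. - right; congruence. }
  split.
  - eapply leS_trans; [exact Htr| apply le_max_l | exact Hm].
  - eapply leS_trans; [exact Htr| apply (le_max_r R a Hto q1) | exact Hm].
Qed.

Lemma godel_wf {X} (R : X -> X -> Prop) a : well_founded R -> well_founded (godel R a).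
Proof.
  intros wf. unfold godel.
  apply (wf_inverse_image _ _ _ (keyG R a)).
  apply wf_slexprod; [|apply wf_slexprod]; apply ltS_wf; auto.
Qed.

Lemma godel_tot {X} (R : X -> X -> Prop) a :
  (forall x y, R x y \/ x = y \/ R y x) ->
  forall p q, godel R a p q \/ p = q \/ godel R a q p.
Proof.
  intros Ht p q. unfold godel.
  destruct (slex_tot _ _ (ltS_tot R a Ht) (slex_tot _ _ (ltS_tot R a Ht) (ltS_tot R a Ht))
             (keyG R a p) (keyG R a q)) as [H|[H|H]]; auto.
  right; left. destruct p, q. unfold keyG in H. simpl in H. congruence.
Qed.
Definition phi {X} (R : X -> X -> Prop) a (y : X) (x : SS R a) : SS R (Some y) :=
  match x with
  | inl z => match excluded_middle_informative (R (proj1_sig z) y) with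
             | left H => inl (exist (below R (Some y)) (proj1_sig z) H)
             | right _ => inr 0 end
  | inr n => inr (S n)
  end.

Lemma phi_inj {X} (R : X -> X -> Prop) a (yy : {w | below R a w}) x1 x2 :
  leS R a x1 (inl yy) -> leS R a x2 (inl yy) ->
  phi R a (proj1_sig yy) x1 = phi R a (proj1_sig yy) x2 -> x1 = x2.
Proof.
  intros L1 L2 E.
  destruct x1 as [[z1 H1]|n1], x2 as [[z2 H2]|n2]; unfold phi in E; simpl in E.
  - destruct (excluded_middle_informative (R z1 (proj1_sig yy))) as [r1|r1];
    destruct (excluded_middle_informative (R z2 (proj1_sig yy))) as [r2|r2];
      try discriminate.
    + injection E as E. subst. f_equal. f_equal. apply proof_irrelevance.
    + destruct L1 as [L1|L1]; [simpl in L1; contradiction|].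
      destruct L2 as [L2|L2]; [simpl in L2; contradiction|]. congruence.
  - destruct (excluded_middle_informative _); discriminate.
  - destruct (excluded_middle_informative _); discriminate.
  - congruence.
Qed.

Lemma le_inr {X} (R : X -> X -> Prop) a x n :
  leS R a x (inr n) -> exists i, x = inr i /\ i <= n.
Proof.
  intros [H|H]; destruct x as [u|i]; simpl in H; try contradiction; try discriminate.
  - exists i. split; auto. lia.
  - injection H as ->. exists n. auto.
Qed.

Lemma code_uniq n i1 j1 i2 j2 :
  j1 <= n -> j2 <= n -> i1 * S n + j1 = i2 * S n + j2 -> i1 = i2 /\ j1 = j2.
Proof.
  intros H1 H2 E. destruct (Nat.lt_trichotomy i1 i2) as [L|[L|L]].
  - exfalso. assert (i2 * S n >= (i1 + 1) * S n) by (apply Nat.mul_le_mono_r; lia). nia.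
  - subst. lia.
  - exfalso. assert (i1 * S n >= (i2 + 1) * S n) by (apply Nat.mul_le_mono_r; lia). nia.
Qed.

Lemma below_mono {X} (R : X -> X -> Prop) :
  (forall x y z, R x y -> R y z -> R x z) ->
  forall a b w, ropt R b a -> below R b w -> below R a w.
Proof.
  intros Ht [a|] [b|] w; simpl; try contradiction; eauto.
Qed.

Lemma hess {X} (R : X -> X -> Prop) :
  (forall x y z, R x y -> R y z -> R x z) -> (forall x y, R x y \/ x = y \/ R y x) ->
  well_founded R -> forall a, inj (SS R a * SS R a) (SS R a).
Proof.
  intros Htr Hto Hwf a.
  induction a as [a IH] using (well_founded_induction (ropt_wf R Hwf)).
  destruct (classic (exists b, ropt R b a /\ inj (SS R a) (SS R b))) as [[b [Hb Hinj]]|Hno].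
  - assert (emb : inj (SS R b) (SS R a)).
    { exists (fun x => match x with
                       | inl w => inl (exist _ (proj1_sig w) (below_mono R Htr a b _ Hb (proj2_sig w)))
                       | inr n => inr n end).
      intros [[w1 H1]|n1] [[w2 H2]|n2] E; simpl in E; try discriminate.
      - injection E as E. subst. f_equal. f_equal. apply proof_irrelevance.
      - congruence. }
    exact (inj_trans _ _ _ (inj_prod _ _ _ _ Hinj Hinj) (inj_trans _ _ _ (IH b Hb) emb)).
  - destruct (wf_choose (godel R a) (fun (_ : SS R a * SS R a) (_ : SS R a) => True) (godel_wf R a Hwf) (godel_tot R a Hto))
      as [g [_ Hg]]; [|exists g; exact Hg].
    intros p h.
    destruct (fresh_of_small (godel R a) (fun _ : SS R a => True) p h) as [v [_ Hv]];
      [|exists v; split; auto].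
    intros [c [Hc Hci]].
    assert (Hbd := fun v => godel_bound R a Htr Hto p (c v) (Hc v)).
    remember (maxS R a (fst p) (snd p)) as m eqn:Em.
    destruct m as [yy|n].
    + set (b := Some (proj1_sig yy)).
      assert (Hb : ropt R b a) by (destruct a; simpl; destruct yy; auto).
      destruct (IH b Hb) as [P HP].
      apply Hno. exists b. split; [exact Hb|].
      exists (fun v => P (phi R a (proj1_sig yy) (fst (c (exist _ v I))),
                          phi R a (proj1_sig yy) (snd (c (exist _ v I))))).
      intros v1 v2 E. apply HP in E. injection E as E1 E2.
      destruct (Hbd (exist _ v1 I)) as [B11 B12].
      destruct (Hbd (exist _ v2 I)) as [B21 B22].
      apply phi_inj in E1; auto. apply phi_inj in E2; auto.
      assert (Ec : c (exist _ v1 I) = c (exist _ v2 I)).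
      { destruct (c (exist _ v1 I)), (c (exist _ v2 I)); simpl in *; congruence. }
      apply Hci in Ec. congruence.
    + apply (pigeon (S n * S n)).
      set (code := fun q : SS R a * SS R a =>
                     match q with (inr i, inr j) => i * S n + j | _ => 0 end).
      exists (fun k => code (c (exist _ (inr k) I))). split.
      * intro k. destruct (Hbd (exist _ (inr k) I)) as [B1 B2].
        destruct (le_inr R a _ _ B1) as [i [Ei Hi]].
        destruct (le_inr R a _ _ B2) as [j [Ej Hj]].
        destruct (c (exist _ (inr k) I)) as [q1 q2]. simpl in *. subst. simpl. nia.
      * intros k1 k2 E.
        destruct (Hbd (exist _ (inr k1) I)) as [B1 B2].
        destruct (le_inr R a _ _ B1) as [i [Ei Hi]].
        destruct (le_inr R a _ _ B2) as [j [Ej Hj]].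
        destruct (Hbd (exist _ (inr k2) I)) as [C1 C2].
        destruct (le_inr R a _ _ C1) as [i' [Ei' Hi']].
        destruct (le_inr R a _ _ C2) as [j' [Ej' Hj']].
        assert (Ec : c (exist _ (inr k1) I) = c (exist _ (inr k2) I)).
        { destruct (c (exist _ (inr k1) I)) as [q1 q2], (c (exist _ (inr k2) I)) as [r1 r2].
          simpl in *. subst. simpl in E. destruct (code_uniq n i j i' j' Hj Hj' E). subst.
          reflexivity. }
        apply Hci in Ec. congruence.
Qed.
Lemma absorb {X} (R : X -> X -> Prop) (s : nat -> X) :
  (forall n m, s n = s m -> n = m) -> inj (SS R None) X.
Proof.
  intros Hs.
  exists (fun x => match x with
    | inl w => match excluded_middle_informative (exists n, s n = proj1_sig w) with
               | left H => s (2 * proj1_sig (constructive_indefinite_description _ H))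
               | right _ => proj1_sig w end
    | inr n => s (2 * n + 1) end).
  intros [[w1 H1]|n1] [[w2 H2]|n2]; simpl.
  - destruct (excluded_middle_informative (exists n, s n = w1)) as [e1|e1];
    destruct (excluded_middle_informative (exists n, s n = w2)) as [e2|e2]; intro E.
    + destruct (constructive_indefinite_description _ e1) as [k1 K1].
      destruct (constructive_indefinite_description _ e2) as [k2 K2]. simpl in E.
      apply Hs in E. assert (k1 = k2) by lia. subst.
      destruct H1, H2. reflexivity.
    + exfalso. apply e2. destruct (constructive_indefinite_description _ e1) as [k1 K1].
      simpl in E. eauto.
    + exfalso. apply e1. destruct (constructive_indefinite_description _ e2) as [k2 K2].
      simpl in E. eauto.
    + subst. destruct H1, H2. reflexivity.
  - destruct (excluded_middle_informative (exists n, s n = w1)) as [e1|e1]; intro E.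
    + destruct (constructive_indefinite_description _ e1) as [k1 K1]. simpl in E.
      apply Hs in E. lia.
    + exfalso. apply e1. eauto.
  - destruct (excluded_middle_informative (exists n, s n = w2)) as [e2|e2]; intro E.
    + destruct (constructive_indefinite_description _ e2) as [k2 K2]. simpl in E.
      apply Hs in E. lia.
    + exfalso. apply e2. eauto.
  - intro E. apply Hs in E. f_equal. lia.
Qed.

Lemma pairX {X} (R : X -> X -> Prop) (s : nat -> X) :
  (forall x y z, R x y -> R y z -> R x z) -> (forall x y, R x y \/ x = y \/ R y x) ->
  well_founded R -> (forall n m, s n = s m -> n = m) ->
  exists P : X -> X -> X, forall x y x' y', P x y = P x' y' -> x = x' /\ y = y'.
Proof.
  intros Htr Hto Hwf Hs.
  destruct (hess R Htr Hto Hwf None) as [F HF].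
  destruct (absorb R s Hs) as [j Hj].
  exists (fun x y => j (F (inl (exist _ x I), inl (exist _ y I)))).
  intros x y x' y' E. apply Hj, HF in E. injection E as E1 E2. auto.
Qed.

Lemma list_code {X Y : Type} (P : X -> X -> X) (e : Y -> X) (Q : Y -> Prop) (z0 z1 : X) :
  (forall x y x' y', P x y = P x' y' -> x = x' /\ y = y') -> z0 <> z1 ->
  (forall u v, Q u -> Q v -> e u = e v -> u = v) ->
  exists code : list Y -> X, forall l1 l2, (forall u, In u l1 -> Q u) ->
     (forall u, In u l2 -> Q u) -> code l1 = code l2 -> l1 = l2.
Proof.
  intros HP Hz He.
  exists (fix c l := match l with [] => P z0 z0 | y :: l => P z1 (P (e y) (c l)) end).
  induction l1 as [|y1 l1 IH]; intros [|y2 l2] Q1 Q2 E.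
  - reflexivity.
  - apply HP in E. destruct E. contradiction.
  - apply HP in E. destruct E. congruence.
  - apply HP in E. destruct E as [_ E]. apply HP in E. destruct E as [E1 E2].
    apply He in E1; [|apply Q1; simpl; auto|apply Q2; simpl; auto].
    apply IH in E2; [congruence| |]; intros u Hu; [apply Q1|apply Q2]; simpl; auto.
Qed.
Definition rm {T} (b : T) (l : list T) :=
  filter (fun S => if excluded_middle_informative (S = b) then false else true) l.

Lemma in_rm {T} (b : T) l S : In S (rm b l) <-> In S l /\ S <> b.
Proof.
  unfold rm. rewrite filter_In.
  destruct (excluded_middle_informative (S = b)); split; intros [H1 H2]; auto; try discriminate.
Qed.

Theorem mainTheorem2 (X : Type) (R : X -> X -> Prop) :
  is_cardinal R -> uncountable X -> cof_omega R ->
  forall A : (X -> Prop) -> Prop,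
    maximal_independent A ->
    ~ exists f : {S : X -> Prop | A S} -> X, injective f.
Proof.
  intros Hcard _ [s [Hs1 Hs2]] A [Hind Hmax] [f Hf].
  destruct Hcard as [[Hirr [Htr [Hto Hwf]]] Hseg].
  assert (Hslt : forall n m, n < m -> R (s n) (s m)).
  { intros n m H. induction H; eauto. }
  assert (Hsi : forall n m, s n = s m -> n = m).
  { intros n m E. destruct (Nat.lt_trichotomy n m) as [L|[L|L]]; auto;
    apply Hslt in L; rewrite E in L; exfalso; eapply Hirr; eauto. }
  destruct (pairX R s Htr Hto Hwf Hsi) as [P HP].
  set (fA := fun S => match excluded_middle_informative (A S) with
                      | left H => f (exist _ S H) | right _ => s 0 end).
  assert (HfA : forall u v, A u -> A v -> fA u = fA v -> u = v).
  { intros u v Hu Hv. unfold fA.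
    destruct (excluded_middle_informative (A u)); [|contradiction].
    destruct (excluded_middle_informative (A v)); [|contradiction].
    intro E. apply Hf in E. congruence. }
  assert (H01 : s 0 <> s 1) by (intro E; apply Hsi in E; discriminate).
  destruct (list_code P fA A (s 0) (s 1) HP H01 HfA) as [code Hcode].
  set (valid := fun k : list (X -> Prop) * list (X -> Prop) * bool =>
         let '(G, D, b) := k in
         (forall S, In S G -> A S) /\ (forall S, In S D -> A S) /\
         (forall S, In S G -> ~ In S D)).
  set (keycode := fun k : list (X -> Prop) * list (X -> Prop) * bool =>
         let '(G, D, b) := k in P (code G) (P (code D) (if b then s 1 else s 0))).
  assert (Hkc : forall k1 k2, valid k1 -> valid k2 -> keycode k1 = keycode k2 -> k1 = k2).
  { intros [[G1 D1] b1] [[G2 D2] b2] [V1 [V2 _]] [V3 [V4 _]] E. simpl in E.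
    apply HP in E. destruct E as [E1 E]. apply HP in E. destruct E as [E2 E3].
    apply Hcode in E1; auto. apply Hcode in E2; auto. subst.
    destruct b1, b2; auto; apply Hsi in E3; discriminate. }
  set (W := ({k | valid k} * X)%type).
  set (E := fun w : W => P (keycode (proj1_sig (fst w))) (snd w)).
  assert (HE : injective E).
  { intros [[k1 v1] x1] [[k2 v2] x2] Eq. unfold E in Eq. simpl in Eq.
    apply HP in Eq. destruct Eq as [Eq1 Eq2]. apply Hkc in Eq1; auto. subst.
    rewrite (proof_irrelevance _ v1 v2). reflexivity. }
  set (ltW := fun w1 w2 : W => R (E w1) (E w2)).
  set (target := fun w : W => let '(G, D, b) := proj1_sig (fst w) in comb_set G D).
  destruct (wf_choose ltW target) as [g [Hgt Hgi]].
  { exact (wf_inverse_image W X R E Hwf). }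
  { intros x y. unfold ltW. destruct (Hto (E x) (E y)) as [H|[H|H]]; auto. }
  { intros p h. apply fresh_of_small. intros [c [Hc Hci]].
    destruct p as [[[[G D] b] Hv] xi].
    destruct Hv as [HG [HD Hdis]].
    destruct (proj2 Hind G D HG HD Hdis) as [iota Hiota].
    apply (Hseg (E (exist _ (G, D, b) (conj HG (conj HD Hdis)), xi))).
    exists (fun x => exist _ (E (c (iota x))) (Hc (iota x))).
    intros x1 x2 Eq. apply (f_equal (@proj1_sig _ _)) in Eq. simpl in Eq.
    apply HE, Hci, Hiota in Eq. exact Eq. }
  set (B := fun x => exists (k : {k | valid k}) xi, snd (proj1_sig k) = true /\ g (k, xi) = x).
  assert (notB : forall k xi, snd (proj1_sig k) = false -> ~ B (g (k, xi))).
  { intros k xi Hk [k' [xi' [Hk' Eq]]]. apply Hgi in Eq. injection Eq as Eq1 Eq2.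
    subst. congruence. }
  assert (indep : independent (fun S => A S \/ S = B)).
  { split.
    - intros S [HS| ->]; [exact (proj1 Hind S HS)|].
      assert (v0 : valid ([], [], true)) by (simpl; repeat split; intros S []).
      exists (fun xi => exist B (g (exist _ _ v0, xi)) (ex_intro _ (exist _ _ v0) (ex_intro _ xi (conj eq_refl eq_refl)))).
      intros x1 x2 Eq. apply (f_equal (@proj1_sig _ _)) in Eq. simpl in Eq.
      apply Hgi in Eq. congruence.
    - intros G D HG HD Hdis.
      destruct (classic (In B G)) as [BG|BG]; destruct (classic (In B D)) as [BD|BD].
      + exfalso. exact (Hdis B BG BD).
      + assert (v : valid (rm B G, D, true)).
        { simpl. repeat split.
          - intros S HS. apply in_rm in HS. destruct HS as [HS1 HS2].
            destruct (HG S HS1); [assumption|contradiction].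
          - intros S HS. destruct (HD S HS); [assumption|subst; contradiction].
          - intros S HS. apply in_rm in HS. apply Hdis, HS. }
        assert (Hm : forall xi, comb_set G D (g (exist _ _ v, xi))).
        { intro xi.
          pose proof (Hgt (exist _ _ v, xi)) as [T1 T2]. split.
          - intros S HS. destruct (classic (S = B)) as [->|NB].
            + exists (exist _ _ v), xi. auto.
            + apply T1. apply in_rm. auto.
          - exact T2. }
        exists (fun xi => exist _ (g (exist _ _ v, xi)) (Hm xi)).
        intros x1 x2 Eq. apply (f_equal (@proj1_sig _ _)) in Eq. simpl in Eq.
        apply Hgi in Eq. congruence.
      + assert (v : valid (G, rm B D, false)).
        { simpl. repeat split.
          - intros S HS. destruct (HG S HS); [assumption|subst; contradiction].
          - intros S HS. apply in_rm in HS. destruct HS as [HS1 HS2].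
            destruct (HD S HS1); [assumption|contradiction].
          - intros S HS HS'. apply in_rm in HS'. apply (Hdis S HS), HS'. }
        assert (Hm : forall xi, comb_set G D (g (exist _ _ v, xi))).
        { intro xi.
          pose proof (Hgt (exist _ _ v, xi)) as [T1 T2]. split.
          - exact T1.
          - intros S HS. destruct (classic (S = B)) as [->|NB].
            + apply notB. reflexivity.
            + apply T2. apply in_rm. auto. }
        exists (fun xi => exist _ (g (exist _ _ v, xi)) (Hm xi)).
        intros x1 x2 Eq. apply (f_equal (@proj1_sig _ _)) in Eq. simpl in Eq.
        apply Hgi in Eq. congruence.
      + apply (proj2 Hind).
        * intros S HS. destruct (HG S HS); [assumption|subst; contradiction].
        * intros S HS. destruct (HD S HS); [assumption|subst; contradiction].
        * exact Hdis. }
  assert (AB : A B) by (apply (Hmax _ indep (fun S H => or_introl H)); right; reflexivity).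
  assert (vB : valid ([B], [], false)).
  { simpl. repeat split.
    - intros S [<-|[]]. exact AB.
    - intros S [].
    - intros S _ []. }
  pose proof (Hgt (exist _ _ vB, s 0)) as [T1 _].
  exact (notB (exist _ _ vB) (s 0) eq_refl (T1 B (or_introl eq_refl))).
Qed.
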